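(* Let $G$ be an abelian group, let $H\leq G$ be a subgroup with $|H|\geq 3$, and let $Y\subseteq G$ be a finite subset such that $Y\setminus \{y_0\}$ is $H$-periodic (or empty) for some $y_0\in Y$. Then: 1. $Y$ is aperiodic, and $Y=(Y\setminus \{y_0\})\cup \{y_0\}$ is its unique reduced quasi-periodic decomposition. 2. If $Y=Y_1\cup Y_0$ is a $K$-quasi-periodic decomposition (for a nontrivial subgroup $K$, with $Y_0$ the part contained in a $K$-coset), then $y_0\in Y_0$ and $Y_0\setminus \{y_0\}$ is $H$-periodic; moreover, if $|Y_0|\geq 2$, then $H\leq K$. 3. If $A,B\subseteq G$ satisfy $A+B=Y$ and $|A+B|=|A|+|B|-1$, then there are $a_0\in A$ and $b_0\in B$ such that $A\setminus \{a_0\}$ and $B\setminus \{b_0\}$ are $H$-periodic and $a_0+b_0=y_0$.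
   Context: $\mathsf H(A)=\{g\in G:g+A=A\}$ is the stabilizer; $A$ is aperiodic if $\mathsf H(A)$ is trivial, periodic otherwise, and $H$-periodic if it is a union of $H$-cosets. A set $A$ is quasi-periodic if there is a subset $A_\emptyset\subseteq A$ such that $A\setminus A_\emptyset$ is nonempty and periodic and $A_\emptyset$ is contained in a single $\mathsf H(A\setminus A_\emptyset)$-coset. For a nontrivial subgroup $K$, a $K$-quasi-periodic decomposition of $A$ is a partition $A=(A\setminus A_\emptyset)\cup A_\emptyset$ with $A_\emptyset$ a subset of a $K$-coset and $A\setminus A_\emptyset$ $K$-periodic (or empty); a quasi-periodic decomposition is a $K$-quasi-periodic decomposition for some nontrivial $K$; it is reduced if $A_\emptyset$ is not quasi-periodic. $A+B=\{a+b:a\in A,b\in B\}$. *)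

(* Defs.v *)
From HB Require Import structures.
From mathcomp Require Import all_boot all_order all_algebra.
From mathcomp Require Export finmap.
Set Implicit Arguments. Unset Strict Implicit. Unset Printing Implicit Defensive.
Import GRing.Theory.
Local Open Scope ring_scope.
Local Open Scope fset_scope.

Section Defs.
Variable G : zmodType.

Definition is_subgroup (H : G -> Prop) : Prop :=
  H 0 /\ forall x y, H x -> H y -> H (x - y).

Definition nontrivial_subgroup (K : G -> Prop) : Prop :=
  is_subgroup K /\ exists k, K k /\ k <> 0.

Definition card_ge3 (H : G -> Prop) : Prop :=
  exists h1 h2 h3, [/\ H h1, H h2, H h3 & [/\ h1 <> h2, h1 <> h3 & h2 <> h3]].

Definition translate (g : G) (A : {fset G}) : {fset G} := [fset (g + a)%R | a in A].

Definition sumset (A B : {fset G}) : {fset G} := [fset (a + b)%R | a in A, b in B].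

Definition stab (A : {fset G}) (g : G) : Prop := translate g A = A.

Definition periodic (A : {fset G}) : Prop := exists g, g <> 0 /\ stab A g.

Definition aperiodic (A : {fset G}) : Prop := forall g, stab A g -> g = 0.

(* A is H-periodic: a union of H-cosets (the empty set is vacuously so) *)
Definition Hperiodic (H : G -> Prop) (A : {fset G}) : Prop :=
  forall a h, a \in A -> H h -> (a + h)%R \in A.

Definition in_one_coset (K : G -> Prop) (A0 : {fset G}) : Prop :=
  exists c, forall x, x \in A0 -> K (x - c)%R.

Definition quasi_periodic (A : {fset G}) : Prop :=
  exists A0 : {fset G},
    [/\ A0 `<=` A, A `\` A0 != fset0, periodic (A `\` A0)
      & in_one_coset (stab (A `\` A0)) A0].

Definition K_qp_decomp (K : G -> Prop) (A A1 A0 : {fset G}) : Prop :=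
  [/\ A1 `|` A0 = A, [disjoint A1 & A0], in_one_coset K A0 & Hperiodic K A1].

Definition qp_decomp (A A1 A0 : {fset G}) : Prop :=
  exists K, nontrivial_subgroup K /\ K_qp_decomp K A A1 A0.

Definition reduced_qp_decomp (A A1 A0 : {fset G}) : Prop :=
  qp_decomp A A1 A0 /\ ~ quasi_periodic A0.

End Defs.

(* Main.v *)
Require Import Defs.
From HB Require Import structures.
From mathcomp Require Import all_boot all_order all_algebra.
From mathcomp Require Import finmap.
Import GRing.Theory.
Local Open Scope ring_scope.
Local Open Scope fset_scope.

From mathcomp Require Import zify.
From Stdlib Require Import Classical ClassicalEpsilon.
Import GRing.Theory.
Local Open Scope ring_scope.
Local Open Scope fset_scope.

Lemma inj_card_le (G H : choiceType) (f : G -> H) (X : {fset G}) (Z : {fset H}) :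
  {in X &, injective f} -> {in X, forall x, f x \in Z} -> (#|` X| <= #|` Z|)%N.
Proof.
move=> fi fZ; rewrite -(eqP (introT (card_in_imfsetP _ _) fi)).
apply: fsubset_leq_card; apply/fsubsetP => y /imfsetP [x /= xX ->]; exact: fZ.
Qed.

Lemma sumsetP (G : zmodType) (A B : {fset G}) (x : G) :
  reflect (exists a b, [/\ a \in A, b \in B & x = (a + b)%R]) (x \in sumset A B).
Proof.
apply: (iffP (imfset2P _ _ _ _ _)) => [[a aA [b bB ->]]|[a [b [aA bB ->]]]].
  by exists a, b.
by exists a => //; exists b.
Qed.

Lemma mem_sumset (G : zmodType) (A B : {fset G}) a b :
  a \in A -> b \in B -> (a + b)%R \in sumset A B.
Proof. by move=> aA bB; apply/sumsetP; exists a, b. Qed.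

Lemma mem_translate (G : zmodType) g (A : {fset G}) (x : G) :
  (x \in translate g A) = (x - g \in A).
Proof.
apply/imfsetP/idP => [[a /= aA ->]|xA]; first by rewrite [(g + a)%R]addrC addrK.
by exists (x - g)%R => //; rewrite addrC subrK.
Qed.

Lemma card_translate (G : zmodType) g (A : {fset G}) : #|` translate g A| = #|` A|.
Proof. by apply/eqP/card_in_imfsetP => x y _ _ /addrI. Qed.

Lemma translate_sub_eq (G : zmodType) g (A : {fset G}) :
  translate g A `<=` A -> translate g A = A.
Proof.
move=> s; apply/eqP; rewrite eqEfcard s /= card_translate //.
Qed.

Lemma sumsetC (G : zmodType) (A B : {fset G}) : sumset A B = sumset B A.
Proof.
apply/fsetP => x; apply/sumsetP/sumsetP => -[a [b [aA bB ->]]];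
  by exists b, a; rewrite addrC.
Qed.

Lemma in_sepfset (G : choiceType) (A : {fset G}) (P : pred G) (x : G) :
  (x \in [fset y in A | P y]) = (x \in A) && P x.
Proof. by rewrite !inE. Qed.
Arguments inj_card_le {G H f X Z}.
Arguments sumsetP {G A B x}.
Arguments mem_sumset {G A B a b}.
Arguments mem_translate {G g A x}.
Arguments card_translate {G}.
Arguments translate_sub_eq {G g A}.
Arguments sumsetC {G}.
Arguments in_sepfset {G A P x}.

Lemma a1 (G : zmodType) (c y e : G) : (c - (c - y + e) = y - e)%R.
Proof. by rewrite opprD opprB addrA [(c + (y - c))%R]addrC subrK. Qed.
Lemma a2 (G : zmodType) (c y e : G) : (c - (c - y + e) + e = y)%R.
Proof. by rewrite a1 subrK. Qed.
Lemma a3 (G : zmodType) (c y : G) : (c - (c - y) = y)%R.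
Proof. by rewrite opprB addrC subrK. Qed.

Lemma kemperman (G : zmodType) (c : G) n : forall (A B : {fset G}),
  (#|` B| <= n)%N -> (exists a, a \in A /\ (c - a)%R \in B) ->
  (#|` A| + #|` B| <= #|` sumset A B| + #|` [fset x in A | (c - x)%R \in B]|)%N.
Proof.
elim: n => [|n IH] A B.
  rewrite leqn0 => /eqP /cardfs0_eq -> [a [_]]; by rewrite inE.
move=> cB [a [aA bB]]; set b := (c - a)%R in bB.
have cab : c = (a + b)%R by rewrite /b addrC subrK.
case: (classic (exists x, x \in A /\ ~~ (translate (x - b)%R B `<=` A))).
  move=> [x [xA /fsubsetPn [z zT zA]]].
  set e := (x - b)%R in zT.
  set A' := A `|` translate e B.
  set B' := [fset y in B | (y + e)%R \in A].
  have B'B : B' `<=` B by apply/fsubsetP => y; rewrite in_sepfset => /andP[].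
  have ltB : (#|` B'| < #|` B|)%N.
    rewrite ltn_neqAle fsubset_leq_card // andbT (fsubset_leqif_cards B'B).2.
    apply/negP => /eqP eB; move: zT; rewrite mem_translate => zB.
    have : (z - e)%R \in B' by rewrite eB.
    by rewrite in_sepfset zB /= subrK (negbTE zA).
  have IH' := IH A' B' (leq_trans ltB cB).
  have bB' : b \in B' by rewrite in_sepfset bB /e addrC subrK.
  have aA' : a \in A' by rewrite in_fsetU aA.
  have {IH'} := IH' (ex_intro _ a (conj aA' bB')).
  have e1 : (#|` A'| + #|` B'| = #|` A| + #|` B|)%N.
    have E : A `&` translate e B = translate e B'.
      apply/fsetP => y; rewrite in_fsetI !mem_translate in_sepfset subrK.
      by rewrite andbC.
    by rewrite -(card_translate e B') -E cardfsUI card_translate.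
  have e2 : (#|` sumset A' B'| <= #|` sumset A B|)%N.
    apply: fsubset_leq_card; apply/fsubsetP => y /sumsetP [u [v [uA vB ->]]].
    move: uA; rewrite in_fsetU mem_translate => /orP [uA|uB].
      by apply: mem_sumset => //; apply: (fsubsetP B'B).
    move: vB; rewrite in_sepfset => /andP [vB vA].
    have -> : (u + v = (v + e) + (u - e))%R.
      by rewrite addrC -addrA [(e + _)%R]addrC subrK.
    exact: mem_sumset.
  have e3 : (#|` [fset x in A' | (c - x)%R \in B']| <=
             #|` [fset x in A | (c - x)%R \in B]|)%N.
    apply: (inj_card_le (f := fun y => if y \in A then y else (c - y + e)%R)).
      move=> y1 y2; rewrite !inE /= => /andP [_ /andP [_ h1]] /andP [_ /andP [_ h2]].
      case: ifP => y1A; case: ifP => y2A //.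
      - by move=> E; move: h1; rewrite E a2 y2A.
      - by move=> E; move: h2; rewrite -E a2 y1A.
      - by move/addIr/addrI/oppr_inj.
    move=> y; rewrite !inE /= => /andP [yA' /andP [cyB cyeA]].
    case: ifP => yA; first by rewrite yA.
    move: yA'; rewrite yA /= mem_translate => yeB.
    by rewrite a1 yeB andbT; exact: cyeA.
  rewrite -e1; move=> h; apply: (leq_trans h); exact: leq_add.
move=> nex.
have hx : forall x, x \in A -> translate (x - b)%R B `<=` A.
  move=> x xA; case: (boolP (translate (x - b)%R B `<=` A)) => // hn.
  by exfalso; apply: nex; exists x.
apply: leq_add.
  apply: (inj_card_le (f := fun x => (x + b)%R)).
    by move=> ? ? _ _ /addIr.
  by move=> x xA; apply: mem_sumset.
apply: (inj_card_le (f := fun y => (c - y)%R)).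
  by move=> ? ? _ _ /addrI /oppr_inj.
move=> y yB; rewrite !inE /= a3 yB andbT.
have sub : translate (y - b)%R A `<=` A.
  apply/fsubsetP => z; rewrite mem_translate => wA.
  apply: (fsubsetP (hx _ wA)); rewrite mem_translate.
  by rewrite a1 opprK subrK.
have : a \in translate (y - b)%R A by rewrite (translate_sub_eq sub).
by rewrite mem_translate cab opprB addrA.
Qed.

Lemma sg0 (G : zmodType) (H : G -> Prop) : is_subgroup H -> H 0.
Proof. by case. Qed.
Lemma sgN (G : zmodType) (H : G -> Prop) x : is_subgroup H -> H x -> H (- x)%R.
Proof. by move=> [h0 hB] hx; rewrite -sub0r; apply: hB. Qed.
Lemma sgB (G : zmodType) (H : G -> Prop) x y : is_subgroup H -> H x -> H y -> H (x - y)%R.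
Proof. by move=> [h0 hB]; apply: hB. Qed.
Lemma sgD (G : zmodType) (H : G -> Prop) x y : is_subgroup H -> H x -> H y -> H (x + y)%R.
Proof. by move=> sH hx hy; rewrite -[y]opprK; apply: sgB => //; apply: sgN. Qed.
Arguments sgN {G H x}.
Arguments sgB {G H x y}.
Arguments sgD {G H x y}.

Lemma b1 (G : zmodType) (u v c : G) : ((u - c) - (v - c) = u - v)%R.
Proof. by rewrite opprB addrA subrK. Qed.
Lemma b2 (G : zmodType) (x a b : G) : ((x + a) - (x + b) = a - b)%R.
Proof. by rewrite opprD addrA [(x + a)%R]addrC addrK. Qed.
Lemma b3 (G : zmodType) (x k h : G) : (x + k + h + - k = x + h)%R.
Proof. by rewrite addrAC addrK. Qed.
Lemma b5 (G : zmodType) (a h : G) : ((a + h) - a = h)%R.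
Proof. by rewrite addrC addKr. Qed.
Lemma b4 (G : zmodType) (a h y : G) : (a + h + - (a - y) = y + h)%R.
Proof. by rewrite opprB addrC addrA subrK addrC. Qed.

Lemma addr_eq_l (G : zmodType) (x h : G) : (x + h = x)%R -> h = 0.
Proof. by move=> e; apply: (addrI x); rewrite addr0. Qed.
Arguments addr_eq_l {G x h}.

Definition setting (G : zmodType) (H : G -> Prop) (Y : {fset G}) (y0 : G) :=
  [/\ is_subgroup H, y0 \in Y & Hperiodic H (Y `\ y0)].
Arguments setting {G}.

Lemma factN (G : zmodType) (H : G -> Prop) (Y : {fset G}) (y0 : G) h :
  setting H Y y0 -> H h -> h <> 0 -> (y0 + h)%R \notin Y.
Proof.
move=> [sH y0Y per] hh hn; apply/negP => yh.
have : (y0 + h)%R \in Y `\ y0.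
  rewrite in_fsetD1 yh andbT; apply/negP => /eqP /addr_eq_l; exact: hn.
move/per => /(_ _ (sgN sH hh)); rewrite addrK in_fsetD1 eqxx //.
Qed.

Arguments factN {G H Y y0 h}.
Lemma factP (G : zmodType) (H : G -> Prop) (Y : {fset G}) (y0 : G) (x h : G) :
  setting H Y y0 -> x \in Y -> x != y0 -> H h -> (x + h)%R \in Y `\ y0.
Proof. by move=> [sH y0Y per] xY xn hh; apply: per => //; rewrite in_fsetD1 xn. Qed.

Arguments factP {G H Y y0 x h}.
Lemma two_nonzero (G : zmodType) (H : G -> Prop) :
  card_ge3 H -> exists h1 h2, [/\ H h1, H h2, h1 <> 0, h2 <> 0 & h1 <> h2].
Proof.
move=> [h1 [h2 [h3 [H1 H2 H3 [d12 d13 d23]]]]].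
case: (eqVneq h1 0) => [e1|n1].
  by exists h2, h3; split => // e; [apply: d12 | apply: d13]; rewrite e1 e.
case: (eqVneq h2 0) => [e2|n2].
  by exists h1, h3; split => //; [apply/eqP | move=> e; apply: d23; rewrite e2 e].
by exists h1, h2; split => //; apply/eqP.
Qed.

Arguments two_nonzero {G H}.
Lemma part2 (G : zmodType) (H : G -> Prop) (Y : {fset G}) (y0 : G) (K : G -> Prop) (Y1 Y0 : {fset G}) :
  setting H Y y0 -> card_ge3 H ->
  nontrivial_subgroup K -> K_qp_decomp K Y Y1 Y0 ->
  [/\ y0 \in Y0, Hperiodic H (Y0 `\ y0)
    & (1 < #|` Y0|)%N -> forall h, H h -> K h].
Proof.
move=> st c3 [sK [k [Kk kn]]] [U D [c Cc] perK].
have [sH y0Y per] := st.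
have inY : forall x, x \in Y1 -> x \in Y by move=> x xY; rewrite -U in_fsetU xY.
have inY0 : forall x, x \in Y0 -> x \in Y by move=> x xY; rewrite -U in_fsetU xY orbT.
have y0Y0 : y0 \in Y0.
  move: y0Y; rewrite -U in_fsetU => /orP [y0Y1|//]; exfalso.
  have [h1 [h2 [H1 H2 n1 n2 n12]]] := two_nonzero c3.
  case: (classic (K (h1 - h2)%R)) => [K12|nK12].
    have a : (y0 + (h1 - h2))%R \in Y by apply: inY; apply: perK.
    have b : (y0 + (h1 - h2))%R != y0.
      by apply/negP => /eqP /addr_eq_l /eqP; rewrite subr_eq0; apply/negP/eqP.
    have := factP st a b H2; rewrite -addrA subrK => /fsetD1P [_].
    by apply/negP/(factN st H1 n1).
  have a : (y0 + k)%R \in Y by apply: inY; apply: perK.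
  have b : (y0 + k)%R != y0.
    by apply/negP => /eqP /addr_eq_l.
  have e1 := factP st a b H1; have e2 := factP st a b H2.
  have gen : forall h, H h -> h <> 0 -> (y0 + k + h)%R \in Y1 -> False.
    move=> h hh hn yY1.
    have := perK _ _ yY1 (sgN sK Kk); rewrite b3 => /inY.
    by apply/negP/(factN st hh hn).
  move: e1 e2; rewrite !in_fsetD1 -!U !in_fsetU => /andP [_ /orP [i1|i1]];
    first by case: (gen _ H1 n1 i1).
  move=> /andP [_ /orP [i2|i2]]; first by case: (gen _ H2 n2 i2).
  apply: nK12; have := sgB sK (Cc _ i1) (Cc _ i2); by rewrite b1 b2.
have perH : Hperiodic H (Y0 `\ y0).
  move=> a h /fsetD1P [an aY0] hh.
  have := factP st (inY0 _ aY0) an hh; rewrite !in_fsetD1 => /andP [-> ].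
  rewrite -U in_fsetU => /orP [ahY1|//]; exfalso.
  case: (eqVneq h 0) => [h0|hn].
    move: (D); rewrite -fdisjoint_sym => /fdisjointP /(_ _ aY0).
    by rewrite -[a]addr0 -h0 ahY1.
  have Ka : K (a - y0)%R by have := sgB sK (Cc _ aY0) (Cc _ y0Y0); rewrite b1.
  have := perK _ _ ahY1 (sgN sK Ka); rewrite b4 => /inY.
  by apply/negP/(factN st hh); apply/eqP.
split => // c1 h hh.
have : Y0 `\ y0 != fset0.
  by rewrite -cardfs_gt0; move: c1; rewrite (cardfsD1 y0) y0Y0.
case/fset0Pn => a aY.
have ahY := perH _ _ aY hh.
move: aY ahY => /fsetD1P [_ aY0] /fsetD1P [_ ahY0].
by have := sgB sK (Cc _ ahY0) (Cc _ aY0); rewrite b1 b5.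
Qed.
Arguments part2 {G H Y y0 K Y1 Y0}.

Lemma stab0 (G : zmodType) (A : {fset G}) : stab A 0.
Proof. by apply/fsetP => x; rewrite mem_translate subr0. Qed.

Lemma part1 (G : zmodType) (H : G -> Prop) (Y : {fset G}) (y0 : G) :
  setting H Y y0 -> card_ge3 H ->
  aperiodic Y /\ reduced_qp_decomp Y (Y `\ y0) [fset y0] /\
       forall Y1 Y0 : {fset G}, reduced_qp_decomp Y Y1 Y0 ->
         Y1 = Y `\ y0 /\ Y0 = [fset y0].
Proof.
move=> st c3; have [sH y0Y per] := st.
have [h1 [h2 [H1 H2 n1 n2 n12]]] := two_nonzero c3.
split.
  move=> g sg; apply/eqP/negP => /negP gn.
  have gY : forall z, z \in Y -> (z + g)%R \in Y.
    by move=> z zY; rewrite -sg mem_translate addrK.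
  have : y0 \in translate g Y by rewrite sg.
  rewrite mem_translate => ygY.
  have ygn : (y0 - g)%R != y0.
    apply/negP => /eqP /addr_eq_l /eqP; rewrite oppr_eq0; exact/negP.
  have := factP st ygY ygn H1 => /fsetD1P [_ /gY].
  rewrite addrAC subrK; exact/negP/(factN st H1 n1).
split.
  split.
    exists H; split; first by split => //; exists h1.
    split => //.
    - apply/fsetP => x; rewrite in_fsetU in_fsetD1 in_fset1.
      by case: (eqVneq x y0) => [->|] /=; rewrite ?orbT ?orbF.
    - by rewrite fdisjointX1 in_fsetD1 eqxx.
    - by exists y0 => x /fset1P ->; rewrite subrr; case: sH.
  move=> [A0 [sub ne [g [gn sg]] _]].
  case/fset0Pn: ne => z zD.
  have : (g + z)%R \in [fset y0] `\` A0 by rewrite -sg; apply/imfsetP; exists z.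
  move: zD => /fsetDP [/fset1P -> _] /fsetDP [/fset1P e _].
  by apply: gn; rewrite addrC in e; apply: addr_eq_l e.
move=> Y1 Y0 [[K [nK dec]] nqp].
have [y0Y0 perH _] := part2 st c3 nK dec.
have [U D _ _] := dec.
have eY0 : Y0 `\ y0 = fset0.
  apply/eqP; apply/negP => /negP ne; apply: nqp.
  exists [fset y0]; split.
  - by rewrite fsub1set.
  - exact: ne.
  - exists h1; split => //.
    apply: translate_sub_eq; apply/fsubsetP => z; rewrite mem_translate => zD.
    by have := perH _ _ zD H1; rewrite subrK.
  - by exists y0 => x /fset1P ->; rewrite subrr; apply: stab0.
have eY0' : Y0 = [fset y0].
  apply/fsetP => x; rewrite in_fset1; case: (eqVneq x y0) => [->|xn] //.
  apply/negP => xY0.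
  have : x \in Y0 `\ y0 by rewrite in_fsetD1 xn.
  by rewrite eY0 inE.
split => //.
apply/fsetP => x; rewrite in_fsetD1 -U in_fsetU eY0' in_fset1.
case: (eqVneq x y0) => [->|xn] /=; last by rewrite orbF.
apply/negP => y0Y1.
move: D => /fdisjointP /(_ _ y0Y1); by rewrite y0Y0.
Qed.

Arguments part1 {G H Y y0}.

Definition pb (P : Prop) : bool := if excluded_middle_informative P then true else false.
Lemma pbP (P : Prop) : pb P <-> P.
Proof. by rewrite /pb; case: excluded_middle_informative. Qed.

Lemma exists_Hf (G : zmodType) (H : G -> Prop) (Y : {fset G}) (y0 y1 : G) :
  setting H Y y0 -> y1 \in Y `\ y0 -> exists Hf : {fset G}, forall x, x \in Hf <-> H x.
Proof.
move=> [sH _ per] y1Y.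
exists [fset x in translate (- y1)%R (Y `\ y0) | pb (H x)] => x.
rewrite in_sepfset; split; first by move=> /andP [_ /pbP].
move=> hx; apply/andP; split; last exact/pbP.
by rewrite mem_translate opprK addrC; apply: per.
Qed.

Lemma c1 (G : zmodType) (x y f f' : G) : (x + f = y + f')%R -> (x - y = f' - f)%R.
Proof. by move=> e; rewrite -[x](addrK f) e addrAC b5. Qed.

Lemma card_sumset_disj (G : zmodType) (F : {fset G}) n : forall R : {fset G},
  #|` R| = n ->
  (forall x y f f', x \in R -> y \in R -> f \in F -> f' \in F -> (x + f = y + f')%R -> x = y) ->
  #|` sumset R F| = (n * #|` F|)%N.
Proof.
elim: n => [|n IH] R cR dj.
  move/cardfs0_eq: cR => ->; rewrite mul0n; apply/eqP; rewrite cardfs_eq0.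
  apply/eqP/fsetP => z; rewrite inE; apply/negP => /sumsetP [a [b [aA _ _]]].
  by rewrite inE in aA.
have : R != fset0 by rewrite -cardfs_gt0 cR.
case/fset0Pn => x xR.
have cR' : #|` R `\ x| = n by move: cR; rewrite (cardfsD1 x) xR add1n => -[].
have IH' := IH _ cR' (fun a b f f' aR bR => dj a b f f' (fsetD1P _ _ _ aR).2 (fsetD1P _ _ _ bR).2).
have E : sumset R F = translate x F `|` sumset (R `\ x) F.
  apply/fsetP => z; rewrite in_fsetU mem_translate.
  apply/sumsetP/orP => [[a [f [aR fF ->]]]|[zF|/sumsetP [a [f [aR fF ->]]]]].
  - case: (eqVneq a x) => [->|an]; first by left; rewrite [(x + f)%R]addrC addrK.
    by right; apply: mem_sumset => //; rewrite in_fsetD1 an.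
  - by exists x, (z - x)%R; split => //; rewrite addrC subrK.
  - by exists a, f; split => //; move: aR => /fsetD1P [].
have I0 : translate x F `&` sumset (R `\ x) F = fset0.
  apply/fsetP => z; rewrite in_fsetI mem_translate inE.
  apply/negP => /andP [zF /sumsetP [a [f [/fsetD1P [an aR] fF e]]]].
  have : x = a.
    apply: (dj x a (z - x)%R f xR aR zF fF).
    by rewrite -e addrC subrK.
  by move=> ex; move: an; rewrite ex eqxx.
have := cardfsUI (translate x F) (sumset (R `\ x) F).
by rewrite -E I0 cardfs0 addn0 card_translate IH' mulSn => ->.
Qed.

Arguments exists_Hf {G H Y y0 y1}.
Arguments card_sumset_disj {G F n R}.

Lemma side_AT (G : zmodType) (H : G -> Prop) (Y : {fset G}) (y0 : G) (Hf A B : {fset G}) :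
  setting H Y y0 -> (forall x, x \in Hf <-> H x) ->
  (forall a b, a \in A -> b \in B -> (a + b)%R \in Y) ->
  forall x, x \in A -> x \in sumset [fset a in A | (y0 - a)%R \in B] Hf ->
  x \in [fset a in A | (y0 - a)%R \in B].
Proof.
move=> st hf sp x xA /sumsetP [a [f [aR fF ex]]]; subst x.
move: (aR); rewrite in_sepfset => /andP [aA bB].
have := sp _ _ xA bB.
have -> : (a + f + (y0 - a) = y0 + f)%R by rewrite addrC addrA subrK addrC.
case: (eqVneq f 0) => [->|fn]; first by rewrite !addr0.
by move=> yY; exfalso; move: yY; apply/negP/(factN st (proj1 (hf f) fF)); apply/eqP.
Qed.

Arguments side_AT {G H Y y0 Hf A B}.
Lemma side_card (G : zmodType) (H : G -> Prop) (Y : {fset G}) (y0 : G) (Hf A B : {fset G}) :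
  setting H Y y0 -> (forall x, x \in Hf <-> H x) ->
  (forall a b, a \in A -> b \in B -> (a + b)%R \in Y) ->
  #|` sumset [fset a in A | (y0 - a)%R \in B] Hf| =
    (#|` [fset a in A | (y0 - a)%R \in B]| * #|` Hf|)%N.
Proof.
move=> st hf sp; apply: card_sumset_disj => // x y f f'.
rewrite !in_sepfset => /andP [xA _] /andP [yA yB] fF f'F e.
have d := c1 _ _ _ _ _ e.
have Hd : H (x - y)%R by rewrite d; apply: sgB; [case: st | apply/hf.. ].
have := sp _ _ xA yB.
have -> : (x + (y0 - y) = y0 + (x - y))%R by rewrite addrCA.
case: (eqVneq (x - y)%R 0) => [/eqP|dn]; first by rewrite subr_eq0 => /eqP.
by move=> yY; exfalso; move: yY; apply/negP/(factN st Hd); apply/eqP.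
Qed.

Arguments side_card {G H Y y0 Hf A B}.
Lemma side_low (G : zmodType) (H : G -> Prop) (Y : {fset G}) (y0 : G) (Hf A B : {fset G}) :
  setting H Y y0 -> (forall x, x \in Hf <-> H x) ->
  (forall a b, a \in A -> b \in B -> (a + b)%R \in Y) ->
  (#|` A| + #|` [fset a in A | (y0 - a)%R \in B]| * #|` Hf| <=
   #|` sumset A Hf| + #|` [fset a in A | (y0 - a)%R \in B]|)%N.
Proof.
move=> st hf sp.
have h0 : (0 : G) \in Hf by apply/hf; case: st => [[]].
set RA := [fset a in A | (y0 - a)%R \in B].
set T := sumset RA Hf.
have sub : A `|` T `<=` sumset A Hf.
  apply/fsubsetP => z; rewrite in_fsetU => /orP [zA|/sumsetP [a [f [aR fF ->]]]].
    by rewrite -[z]addr0; apply: mem_sumset.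
  by apply: mem_sumset => //; move: aR; rewrite in_sepfset => /andP [].
have IT : A `&` T `<=` RA.
  apply/fsubsetP => z; rewrite in_fsetI => /andP [zA zT].
  exact: (side_AT st hf sp _ zA zT).
have := cardfsUI A T; rewrite /T (side_card st hf sp) -/RA -/T.
have := fsubset_leq_card sub; have := fsubset_leq_card IT; lia.
Qed.

Arguments side_low {G H Y y0 Hf A B}.
Lemma side_per (G : zmodType) (H : G -> Prop) (Y : {fset G}) (y0 : G) (Hf A B : {fset G}) a0 :
  setting H Y y0 -> (forall x, x \in Hf <-> H x) ->
  (forall a b, a \in A -> b \in B -> (a + b)%R \in Y) ->
  (#|` sumset A Hf| + #|` [fset a in A | (y0 - a)%R \in B]| <=
   #|` A| + #|` [fset a in A | (y0 - a)%R \in B]| * #|` Hf|)%N ->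
  #|` [fset a in A | (y0 - a)%R \in B]| = 1%N ->
  a0 \in [fset a in A | (y0 - a)%R \in B] ->
  Hperiodic H (A `\ a0).
Proof.
move=> st hf sp le c1' a0R.
have sH : is_subgroup H by case: st.
have h0 : (0 : G) \in Hf by apply/hf; case: sH.
set RA := [fset a in A | (y0 - a)%R \in B] in le c1' a0R.
set T := sumset RA Hf.
have sub : A `|` T `<=` sumset A Hf.
  apply/fsubsetP => z; rewrite in_fsetU => /orP [zA|/sumsetP [a [f [aR fF ->]]]].
    by rewrite -[z]addr0; apply: mem_sumset.
  by apply: mem_sumset => //; move: aR; rewrite in_sepfset => /andP [].
have IT : A `&` T `<=` RA.
  apply/fsubsetP => z; rewrite in_fsetI => /andP [zA zT].
  exact: (side_AT st hf sp _ zA zT).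
have eU : A `|` T = sumset A Hf.
  apply/eqP; rewrite -(fsubset_leqif_cards sub).2 eqn_leq fsubset_leq_card //=.
  have := cardfsUI A T; rewrite /T (side_card st hf sp) -/RA -/T.
  have := fsubset_leq_card IT => h1 h2.
  by rewrite -(leq_add2r #|` RA|); apply: (leq_trans le); rewrite -h2 leq_add2l.
have onlyA : forall r, r \in RA -> r = a0.
  move=> r rR; case: (eqVneq r a0) => // rn; exfalso.
  have := cardfsD1 a0 RA; rewrite a0R c1' => /eqP; rewrite eqSS eq_sym => /eqP.
  move/cardfs0_eq => e.
  have : r \in RA `\ a0 by rewrite in_fsetD1 rn.
  by rewrite e inE.
have AT : forall x, x \in A -> x \in T -> x = a0.
  move=> x xA xT; apply: onlyA; exact: (side_AT st hf sp _ xA xT).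
move=> a h /fsetD1P [an aA] hh.
have : (a + h)%R \in A `|` T by rewrite eU; apply: mem_sumset => //; apply/hf.
rewrite in_fsetU => /orP [ahA|/sumsetP [r [f [rR fF e]]]].
  rewrite in_fsetD1 ahA andbT; apply/negP => /eqP e.
  have : a \in T.
    rewrite -[a](addrK h) e; apply: mem_sumset => //; apply/hf; apply: sgN => //.
  by move/(AT _ aA)/eqP; rewrite (negbTE an).
exfalso; have : a \in T.
  have -> : a = (r + (f - h))%R by rewrite addrA -e addrK.
  by apply: mem_sumset => //; apply/hf; apply: sgB => //; apply/hf.
by move/(AT _ aA)/eqP; rewrite (negbTE an).
Qed.
Arguments side_per {G H Y y0 Hf A B a0}.

Lemma R_le (G : zmodType) (y0 : G) (A B : {fset G}) :
  (#|` [fset a in A | (y0 - a)%R \in B]| <= #|` [fset a in B | (y0 - a)%R \in A]|)%N.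
Proof.
apply: (inj_card_le (f := fun a => (y0 - a)%R)).
  by move=> ? ? _ _ /addrI /oppr_inj.
by move=> a; rewrite !in_sepfset a3 => /andP [-> ->].
Qed.

Lemma part3 (G : zmodType) (H : G -> Prop) (Y : {fset G}) (y0 : G) :
  setting H Y y0 -> card_ge3 H ->
  forall A B : {fset G},
        sumset A B = Y -> #|` sumset A B| = (#|` A| + #|` B| - 1)%N ->
        exists a0 b0, [/\ a0 \in A, b0 \in B, Hperiodic H (A `\ a0),
                          Hperiodic H (B `\ b0) & (a0 + b0)%R = y0].
Proof.
move=> st c3 A B sAB cAB; have [sH y0Y per] := st.
have sp : forall a b, a \in A -> b \in B -> (a + b)%R \in Y.
  by move=> a b aA bB; rewrite -sAB; apply: mem_sumset.
have sp' : forall b a, b \in B -> a \in A -> (b + a)%R \in Y.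
  by move=> b a bB aA; rewrite addrC; apply: sp.
move: (y0Y); rewrite -sAB => /sumsetP [a0 [b0 [a0A b0B e0]]].
exists a0, b0.
case: (eqVneq (Y `\ y0) fset0) => [Y'0 | /fset0Pn [y1 y1Y]].
  have allsum : forall a b, a \in A -> b \in B -> (a + b)%R = y0.
    move=> a b aA bB; case: (eqVneq (a + b)%R y0) => // n.
    have : (a + b)%R \in Y `\ y0 by rewrite in_fsetD1 n sp.
    by rewrite Y'0 inE.
  split => //.
  - move=> a h /fsetD1P [an aA] _; exfalso.
    have := allsum _ _ aA b0B; rewrite e0 => /addIr /eqP; exact/negP.
  - move=> b h /fsetD1P [bn bB] _; exfalso.
    have := allsum _ _ a0A bB; rewrite e0 => /addrI /eqP; exact/negP.
have [Hf hf] := exists_Hf st y1Y.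
have m3 : (3 <= #|` Hf|)%N.
  case: c3 => [h1 [h2 [h3 [H1 H2 H3 [d12 d13 d23]]]]].
  rewrite (cardfsD1 h1) (cardfsD1 h2 (Hf `\ h1)).
  have -> : h1 \in Hf by apply/hf.
  have -> : h2 \in Hf `\ h1 by rewrite in_fsetD1 (introN eqP (nesym d12)) /=; apply/hf.
  rewrite !add1n !ltnS cardfs_gt0; apply/fset0Pn; exists h3.
  rewrite !in_fsetD1; apply/andP; split; first exact/eqP/nesym.
  by apply/andP; split; [exact/eqP/nesym | apply/hf].
have h0 : (0 : G) \in Hf by apply/hf; case: sH.
have Hfadd : forall f f', f \in Hf -> f' \in Hf -> (f + f')%R \in Hf.
  by move=> f f' /hf ff /hf ff'; apply/hf; apply: sgD.
set U := sumset A Hf; set V := sumset B Hf.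
have b0e : (y0 - a0)%R = b0 by rewrite e0 b5.
have a0e : (y0 - b0)%R = a0 by rewrite e0 addrK.
have KL : (#|` U| + #|` V| <= #|` sumset U V| + #|` [fset x in U | (y0 - x)%R \in V]|)%N.
  apply: (@kemperman G y0 #|` V| U V (leqnn _)); exists a0; split.
    by rewrite -[a0]addr0; apply: mem_sumset.
  by rewrite b0e -[b0]addr0; apply: mem_sumset.
have UVc : (#|` sumset U V| + 1 <= #|` Y| + #|` Hf|)%N.
  have sub : sumset U V `<=` Y `|` translate y0 Hf.
    apply/fsubsetP => z /sumsetP [u [v [/sumsetP [a [f [aA fF ->]]] /sumsetP [b [f' [bB f'F ->]]] ->]]].
    rewrite addrACA in_fsetU; case: (eqVneq (a + b)%R y0) => [->|n].
      by rewrite mem_translate [(y0 + _)%R]addrC addrK Hfadd ?orbT.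
    have := factP st (sp _ _ aA bB) n (proj1 (hf _) (Hfadd _ _ fF f'F)).
    by move=> /fsetD1P [_ ->].
  have := cardfsUI Y (translate y0 Hf); rewrite card_translate.
  have : (0 < #|` Y `&` translate y0 Hf|)%N.
    by rewrite cardfs_gt0; apply/fset0Pn; exists y0; rewrite in_fsetI y0Y mem_translate subrr.
  have := fsubset_leq_card sub; lia.
have Sc : (#|` [fset x in U | (y0 - x)%R \in V]| <=
           #|` [fset a in A | (y0 - a)%R \in B]| * #|` Hf|)%N.
  rewrite -(side_card st hf sp); apply: fsubset_leq_card; apply/fsubsetP => x.
  rewrite in_sepfset => /andP [/sumsetP [a [f [aA fF ->]]] /sumsetP [b [f' [bB f'F e]]]].
  have ab : (a + b)%R = y0.
    case: (eqVneq (a + b)%R y0) => // n; exfalso.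
    have := factP st (sp _ _ aA bB) n (proj1 (hf _) (Hfadd _ _ fF f'F)).
    rewrite -addrACA -e addrC subrK in_fsetD1 eqxx //.
  apply: mem_sumset => //; rewrite in_sepfset aA /= -ab b5 //.
have lowA := side_low st hf sp.
have lowB := side_low st hf sp'.
have r1 := R_le _ y0 A B; have r2 := R_le _ y0 B A.
have ra1 : (0 < #|` [fset a in A | (y0 - a)%R \in B]|)%N.
  by rewrite cardfs_gt0; apply/fset0Pn; exists a0; rewrite in_sepfset a0A b0e b0B.
have cA : (0 < #|` A|)%N by rewrite cardfs_gt0; apply/fset0Pn; exists a0.
have cB : (0 < #|` B|)%N by rewrite cardfs_gt0; apply/fset0Pn; exists b0.
rewrite sAB in cAB.
move: KL UVc Sc lowA lowB r1 r2 ra1 cA cB cAB m3.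
set u := #|` U|; set v := #|` V|; set uv := #|` sumset U V|.
set s := #|` [fset x in U | (y0 - x)%R \in V]|.
set ra := #|` [fset a in A | (y0 - a)%R \in B]|.
set rb := #|` [fset a in B | (y0 - a)%R \in A]|.
set na := #|` A|; set nb := #|` B|; set ny := #|` Y|; set m := #|` Hf|.
move=> KL UVc Sc lowA lowB r1 r2 ra1 cA cB cAB m3.
have era : ra = 1%N by nia.
have erb : rb = 1%N by lia.
split => //.
- apply: (side_per st hf sp) => //; first by rewrite -/ra -/u -/na -/m; nia.
  by rewrite in_sepfset a0A b0e b0B.
- apply: (side_per st hf sp') => //; first by rewrite -/rb -/v -/nb -/m; nia.
  by rewrite in_sepfset b0B a0e a0A.
Qed.

Arguments part3 {G H Y y0}.

Theorem lemma2p5 (G : zmodType) (H : G -> Prop) (Y : {fset G}) (y0 : G) :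
  is_subgroup H -> card_ge3 H -> y0 \in Y -> Hperiodic H (Y `\ y0) ->
  [/\ (aperiodic Y /\ reduced_qp_decomp Y (Y `\ y0) [fset y0] /\
       forall Y1 Y0 : {fset G}, reduced_qp_decomp Y Y1 Y0 ->
         Y1 = Y `\ y0 /\ Y0 = [fset y0]),
      (forall (K : G -> Prop) (Y1 Y0 : {fset G}),
         nontrivial_subgroup K -> K_qp_decomp K Y Y1 Y0 ->
         [/\ y0 \in Y0, Hperiodic H (Y0 `\ y0)
           & (1 < #|` Y0|)%N -> forall h, H h -> K h])
    & forall A B : {fset G},
        sumset A B = Y -> #|` sumset A B| = (#|` A| + #|` B| - 1)%N ->
        exists a0 b0, [/\ a0 \in A, b0 \in B, Hperiodic H (A `\ a0),
                          Hperiodic H (B `\ b0) & (a0 + b0)%R = y0]].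
Proof.
move=> sH c3 y0Y per.
have st : setting H Y y0 by split.
split.
- exact: (part1 st c3).
- by move=> K Y1 Y0 nK dec; apply: (part2 st c3 nK dec).
- exact: (part3 st c3).
Qed.
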